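(* Let $\hat{\mathsf{S}}^{-1}=-\gamma_1 \mathsf{W}^{-1}$. Then \begin{equation*} \mathcal{A}_{\gamma_1,\gamma_2} \widetilde{\mathcal{P}}_{\gamma_1,\gamma_2}^{-1} = \begin{bmatrix} \mathsf{I}_n & 0 & 0 \\ \mathsf{A_{21} A_{11}^{-1}} & \mathsf{I}_m-\mathsf{DE} & -\mathsf{DG} \\ \mathsf{C A_{11}^{-1}} & -\mathsf{FE} & \mathsf{I}_\ell-\mathsf{FG} \end{bmatrix}. \end{equation*} The matrix $\mathcal{A}_{\gamma_1,\gamma_2} \widetilde{\mathcal{P}}_{\gamma_1,\gamma_2}^{-1}$ has $1$ as an eigenvalue of algebraic multiplicity at least $n+m$. The remaining eigenvalues are the non-unit eigenvalues of the matrix \begin{equation*} \begin{bmatrix} \mathsf{I}_m - \mathsf{DE} & -\mathsf{DG} \\ -\mathsf{FE} & \mathsf{I}_\ell-\mathsf{FG} \end{bmatrix}. \end{equation*}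
   Context: Let $\mathsf{A}\in\mathbb{R}^{n\times n}$ be symmetric positive definite, $\mathsf{A_2}\in\mathbb{R}^{m\times m}$ symmetric positive semidefinite with $\ker(\mathsf{A_2})=\operatorname{span}\{\mathsf{1}\}$, $\mathsf{C}\in\mathbb{R}^{\ell\times n}$ of full row rank, $\mathsf{C_2}\in\mathbb{R}^{\ell\times m}$ with $\mathsf{1}\notin\ker(\mathsf{C_2})$, $\mathsf{W}\in\mathbb{R}^{\ell\times\ell}$ symmetric positive definite, and $\gamma_1,\gamma_2>0$. Define $\mathsf{A_{11}}=\mathsf{A}+\gamma_1\mathsf{C^TW^{-1}C}$, $\mathsf{A_{12}}=-\gamma_1\mathsf{C^TW^{-1}C_2}$, $\mathsf{A_{21}}=-\gamma_2\mathsf{C_2^TW^{-1}C}$, $\mathsf{A_{22}}=\mathsf{A_2}+\gamma_2\mathsf{C_2^TW^{-1}C_2}$ (both invertible), the augmented matrix $\mathcal{A}_{\gamma_1,\gamma_2}=\begin{bmatrix}\mathsf{A_{11}}&\mathsf{A_{12}}&\mathsf{C^T}\\ \mathsf{A_{21}}&\mathsf{A_{22}}&-\mathsf{C_2^T}\\ \mathsf{C}&-\mathsf{C_2}&0\end{bmatrix}$ and the modified augmented Lagrangian preconditioner $\widetilde{\mathcal{P}}_{\gamma_1,\gamma_2}=\begin{bmatrix}\mathsf{A_{11}}&\mathsf{A_{12}}&\mathsf{C^T}\\ 0&\mathsf{A_{22}}&-\mathsf{C_2^T}\\ 0&0&\hat{\mathsf{S}}\end{bmatrix}$. Further let $\mathsf{D}=\gamma_2\mathsf{C_2^TW^{-1}}\bigl(\mathsf{I}_\ell-(\mathsf{I}_\ell+\gamma_1\mathsf{CA^{-1}C^TW^{-1}})^{-1}\bigr)$,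 $\mathsf{E}=\mathsf{C_2A_{22}^{-1}}$, $\mathsf{G}=\mathsf{I}_\ell-\gamma_1\mathsf{C_2A_{22}^{-1}C_2^TW^{-1}}$, $\mathsf{F}=(\mathsf{I}_\ell+\gamma_1\mathsf{CA^{-1}C^TW^{-1}})^{-1}$. *)

(* Defs.v *)
From mathcomp Require Import all_boot all_order all_algebra.
Set Implicit Arguments. Unset Strict Implicit. Unset Printing Implicit Defensive.
Import Order.TTheory GRing.Theory Num.Theory.
Local Open Scope ring_scope.

Definition spd (R : realFieldType) (k : nat) (M : 'M[R]_k) : Prop :=
  M^T = M /\ forall x : 'cV[R]_k, x != 0 -> 0 < (x^T *m M *m x) 0 0.

Definition spsd (R : realFieldType) (k : nat) (M : 'M[R]_k) : Prop :=
  M^T = M /\ forall x : 'cV[R]_k, 0 <= (x^T *m M *m x) 0 0.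

Definition ones (R : realFieldType) (k : nat) : 'cV[R]_k := const_mx 1.

Definition block3 (R : realFieldType) (n m l : nat)
  (X11 : 'M[R]_(n, n)) (X12 : 'M[R]_(n, m)) (X13 : 'M[R]_(n, l))
  (X21 : 'M[R]_(m, n)) (X22 : 'M[R]_(m, m)) (X23 : 'M[R]_(m, l))
  (X31 : 'M[R]_(l, n)) (X32 : 'M[R]_(l, m)) (X33 : 'M[R]_(l, l))
  : 'M[R]_(n + (m + l)) :=
  block_mx X11 (row_mx X12 X13) (col_mx X21 X31) (block_mx X22 X23 X32 X33).

(* Main.v *)
Require Import Defs.
From mathcomp Require Import all_boot all_order all_algebra.
From mathcomp Require Import lra.
Import Order.TTheory GRing.Theory Num.Theory.
Local Open Scope ring_scope.

Lemma pd_unit (R : realFieldType) k (M : 'M[R]_k) :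
  (forall x : 'cV[R]_k, x != 0 -> 0 < (x^T *m M *m x) 0 0) -> M \in unitmx.
Proof.
move=> H; apply: contraT; rewrite -row_free_unit -kermx_eq0 => nz.
have [i Hi] : exists i, row i (kermx M) != 0.
  apply/existsP; apply: contraR nz; rewrite negb_exists => /forallP Hr.
  apply/eqP/row_matrixP => i; rewrite row0; exact/eqP/negPn/Hr.
set u := row i (kermx M) in Hi.
have uM : u *m M = 0 by rewrite /u -row_mul mulmx_ker row0.
have := H u^T; rewrite trmxK uM mul0mx mxE ltxx; apply.
by rewrite trmx_eq0.
Qed.

Lemma ker_unit (R : realFieldType) k (M : 'M[R]_k) :
  (forall x : 'cV[R]_k, M *m x = 0 -> x = 0) -> M \in unitmx.
Proof.
move=> H; rewrite -unitmx_tr; apply: contraT; rewrite -row_free_unit -kermx_eq0 => nz.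
have [i Hi] : exists i, row i (kermx M^T) != 0.
  apply/existsP; apply: contraR nz; rewrite negb_exists => /forallP Hr.
  apply/eqP/row_matrixP => i; rewrite row0; exact/eqP/negPn/Hr.
set u := row i (kermx M^T) in Hi.
have uM : u *m M^T = 0 by rewrite /u -row_mul mulmx_ker row0.
have : M *m u^T = 0 by rewrite -[M]trmxK -trmx_mul uM trmx0.
by move/H/eqP; rewrite trmx_eq0 (negbTE Hi).
Qed.

Lemma qform_add (R : realFieldType) k (x : 'cV[R]_k) (P Q : 'M[R]_k) (c : R) :
  (x^T *m (P + c *: Q) *m x) 0 0 = (x^T *m P *m x) 0 0 + c * (x^T *m Q *m x) 0 0.
Proof. rewrite mulmxDr mulmxDl -scalemxAr -scalemxAl. set a := x^T *m P *m x. set b := x^T *m Q *m x. by rewrite !mxE. Qed.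

Lemma qform_CtWC (R : realFieldType) k p (x : 'cV[R]_k) (C : 'M[R]_(p,k)) (Q : 'M[R]_p) :
  x^T *m (C^T *m Q *m C) *m x = (C *m x)^T *m Q *m (C *m x).
Proof. by rewrite trmx_mul !mulmxA. Qed.

Lemma inv_uniq (R : realFieldType) k (P Q : 'M[R]_k) : P *m Q = 1%:M -> invmx P = Q.
Proof.
move=> PQ; have [uP _] := mulmx1_unit PQ.
by rewrite -[invmx P]mulmx1 -PQ mulmxA mulVmx // mul1mx.
Qed.

Lemma Z1 (V : zmodType) (x y z : V) : x + (- (y - z) - (x + z)) = - y.
Proof. by rewrite opprB addrA opprD addrACA subrr add0r addrAC subrr add0r. Qed.
Lemma Z2 (V : zmodType) (c a s f : V) : c + (a + (s - (f + a))) = c + s - f.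
Proof. by rewrite opprD (addrCA a s) (addrCA a (- f)) subrr addr0 addrA. Qed.


Lemma sylvester (Rp : comNzRingType) k j (U : 'M[Rp]_(k, j)) (V : 'M[Rp]_(j, k)) (t : Rp) :
  t ^+ j * \det (t%:M + U *m V) = t ^+ k * \det (t%:M + V *m U).
Proof.
set X := block_mx (t%:M : 'M_k) (- U) V (1%:M : 'M_j).
have h1 : X = block_mx 1%:M (- U) 0 1%:M *m block_mx (t%:M + U *m V) 0 V 1%:M.
  rewrite mulmx_block !mul1mx !mul0mx !mulmx1 !add0r mulNmx.
  by rewrite addrK /X.
have h2 : block_mx 1%:M 0 (- V) (t%:M : 'M_j) *m X = block_mx t%:M (- U) 0 (t%:M + V *m U).
  rewrite mulmx_block !mul1mx !mul0mx !mulmx1 !addr0 mulNmx mul_mx_scalar mul_scalar_mx addNr.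
  by rewrite mulNmx mulmxN opprK addrC.
have := congr1 determinant h2.
rewrite det_mulmx det_lblock det1 mul1r det_scalar h1 det_mulmx det_ublock !det1 mul1r.
by rewrite det_lblock det1 mulr1 mul1r det_ublock det_scalar => ->.
Qed.

Ltac mxnorm := do ![rewrite -scalemxAl | rewrite -scalemxAr | rewrite mulmxA | rewrite scalerA].

Theorem mainTheorem8 (R : realFieldType) (n m l : nat)
  (A : 'M[R]_n) (A2 : 'M[R]_m) (C : 'M[R]_(l, n)) (C2 : 'M[R]_(l, m))
  (W : 'M[R]_l) (g1 g2 : R) :
  spd A -> spsd A2 ->
  (forall x : 'cV[R]_m, A2 *m x = 0 <-> exists c : R, x = c *: ones R m) ->
  \rank C = l ->
  C2 *m ones R m != 0 ->
  spd W -> 0 < g1 -> 0 < g2 ->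
  let A11 := A + g1 *: (C^T *m invmx W *m C) in
  let A12 := - (g1 *: (C^T *m invmx W *m C2)) in
  let A21 := - (g2 *: (C2^T *m invmx W *m C)) in
  let A22 := A2 + g2 *: (C2^T *m invmx W *m C2) in
  let Shat := invmx (- (g1 *: invmx W)) in
  let Acal := block3 A11 A12 C^T A21 A22 (- C2^T) C (- C2) 0 in
  let Ptil := block3 A11 A12 C^T 0 A22 (- C2^T) 0 0 Shat in
  let F := invmx (1%:M + g1 *: (C *m invmx A *m C^T *m invmx W)) in
  let D := g2 *: (C2^T *m invmx W *m (1%:M - F)) in
  let E := C2 *m invmx A22 in
  let G := 1%:M - g1 *: (C2 *m invmx A22 *m C2^T *m invmx W) in
  let T := block_mx (1%:M - D *m E) (- (D *m G)) (- (F *m E)) (1%:M - F *m G) in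
  let M := Acal *m invmx Ptil in
  [/\ M = block_mx 1%:M 0 (col_mx (A21 *m invmx A11) (C *m invmx A11)) T,
      (n + m <= mup 1 (char_poly M))%N
    & char_poly M = ('X - 1%:P) ^+ n * char_poly T].
Proof.
move=> [AT Apos] [A2T A2nn] hker _ hC2 [WT Wpos] g1p g2p.
move=> A11 A12 A21 A22 Shat Acal Ptil F D E G T M.
set Wi := invmx W.
have uW : W \in unitmx by apply: pd_unit.
have WiT : Wi^T = Wi by rewrite /Wi trmx_inv WT.
have Wipos : forall x : 'cV[R]_l, x != 0 -> 0 < (x^T *m Wi *m x) 0 0.
  move=> x x0; have := Wpos (Wi *m x).
  rewrite trmx_mul WiT -!mulmxA (mulmxA W) mulmxV // mul1mx !mulmxA; apply.
  apply: contra x0 => /eqP y0; by rewrite -(mulKVmx uW x) -/Wi y0 mulmx0.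
have Wi0 : forall x : 'cV[R]_l, (x^T *m Wi *m x) 0 0 = 0 -> x = 0.
  move=> x h; apply/eqP; apply: contraT => /Wipos; by rewrite h ltxx.
have Winn : forall x : 'cV[R]_l, 0 <= (x^T *m Wi *m x) 0 0.
  move=> x; have [->|/Wipos/ltW//] := eqVneq x 0.
  by rewrite trmx0 !mul0mx mxE.
have uA : A \in unitmx by apply: pd_unit.
have uA11 : A11 \in unitmx.
  apply: pd_unit => x x0; rewrite /A11 qform_add qform_CtWC.
  by apply: ltr_wpDr; [apply: mulr_ge0; [apply: ltW|apply: Winn]| apply: Apos].
have uA22 : A22 \in unitmx.
  apply: ker_unit => x Hx.
  have q0 : (x^T *m A22 *m x) 0 0 = 0 by rewrite -mulmxA Hx mulmx0 mxE.
  move: q0; rewrite /A22 qform_add qform_CtWC => q0.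
  have h1 := A2nn x; have h2 := Winn (C2 *m x).
  have e2 : ((C2 *m x)^T *m Wi *m (C2 *m x)) 0 0 = 0.
    nra.
  have Cx : C2 *m x = 0 := Wi0 _ e2.
  have : A2 *m x = 0.
    by move: Hx; rewrite /A22 mulmxDl -scalemxAl -!mulmxA Cx !mulmx0 scaler0 addr0.
  case/hker => c xc; move: Cx; rewrite xc -scalemxAr => /eqP.
  by rewrite scaler_eq0 (negbTE hC2) orbF => /eqP ->; rewrite scale0r.
have g1n0 : g1 != 0 by rewrite gt_eqF.
have SP : (- (g1 *: Wi)) *m (- (g1^-1) *: W) = 1%:M.
  by rewrite -scalemxAr mulNmx -scalemxAl mulVmx // scalerN scalerA mulNr mulVf // scaleN1r opprK.
have Shat_eq : Shat = - (g1^-1) *: W by apply: inv_uniq.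
have uShat : Shat \in unitmx by rewrite /Shat unitmx_inv; case: (mulmx1_unit SP).
set Ai := invmx A. set A11i := invmx A11. set A22i := invmx A22.
have K1 : g1 *: (C^T *m Wi *m C) = A11 - A by rewrite /A11 addrC addKr.
have K2 : Ai *m (A11 - A) *m A11i = Ai - A11i.
  by rewrite mulmxBr mulmxBl -mulmxA mulmxV // mulmx1 mulVmx // mul1mx.
set Y := g1 *: (C *m A11i *m C^T *m Wi).
have HF : F = 1%:M - Y.
  rewrite /F; apply: inv_uniq.
  set X := g1 *: (C *m Ai *m C^T *m Wi).
  have XY : X *m Y = g1 *: (C *m (Ai *m (g1 *: (C^T *m Wi *m C)) *m A11i) *m C^T *m Wi).
    by rewrite /X /Y; mxnorm.
  rewrite (mulmxDl 1%:M X) mul1mx mulmxBr mulmx1 XY K1 K2 mulmxBr !mulmxBl scalerBr.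
  by rewrite subKr subrK.
have D_eq : D = g2 *: (C2^T *m Wi *m Y) by rewrite /D HF subKr.
have uPtil : Ptil \in unitmx.
  by rewrite /Ptil /block3 col_mx0 unitmxE !det_ublock !unitrM -!unitmxE uA11 uA22 uShat.
have HM : M = block_mx 1%:M 0 (col_mx (A21 *m A11i) (C *m A11i)) T.
  rewrite /M; set N := block_mx _ _ _ _.
  suff <- : N *m Ptil = Acal by rewrite mulmxK.
  rewrite /N /Ptil /Acal /block3 col_mx0 mulmx_block !mul1mx !mul0mx !mulmx0 !addr0.
  rewrite mul_col_mx mul_col_row /T mulmx_block add_block_mx !mulmx0 !addr0 !mulmxKV //.
  have h_WS : Wi *m Shat = - (g1^-1) *: 1%:M by rewrite Shat_eq -scalemxAr mulVmx.
  have EA22 : E *m A22 = C2 by rewrite /E mulmxKV.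
  have h_GS : G *m Shat = Shat + E *m C2^T.
    rewrite /G mulmxBl mul1mx -scalemxAl -(mulmxA _ Wi Shat) h_WS -scalemxAr mulmx1.
    by rewrite scalerA mulrN mulfV // scaleN1r opprK.
  have h_d : Y *m Shat = - (C *m A11i *m C^T).
    by rewrite /Y -scalemxAl -mulmxA h_WS -scalemxAr mulmx1 scalerA mulrN mulfV // scaleN1r.
  have h_b : A21 *m A11i *m C^T = D *m Shat.
    rewrite D_eq -scalemxAl -(mulmxA _ Y Shat) h_d /A21 !mulNmx mulmxN scalerN; congr (- _); mxnorm.
    done.
  have h_c : C *m A11i *m A12 = - (Y *m C2).
    by rewrite /A12 /Y mulmxN; congr (- _); mxnorm.
  have h_a : A21 *m A11i *m A12 = D *m C2.
    by rewrite D_eq /A21 /A12 /Y !mulNmx mulmxN opprK; mxnorm.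
  congr block_mx; congr block_mx.
  - by rewrite h_a (mulmxBl 1%:M (D *m E)) mul1mx -mulmxA EA22 subrKC.
  - rewrite h_b mulmxN (mulmxBl 1%:M (D *m E)) mul1mx mulNmx -(mulmxA D G Shat) h_GS mulmxDr !mulmxA.
    by rewrite Z1.
  - by rewrite h_c mulNmx -mulmxA EA22 HF (mulmxBl 1%:M Y) mul1mx opprB addKr.
  - rewrite mulNmx mulmxN opprK (mulmxBl 1%:M (F *m G)) mul1mx -(mulmxA F G Shat) h_GS mulmxDr !mulmxA.
    by rewrite Z2 HF (mulmxBl 1%:M Y) mul1mx h_d opprK (addrC Shat) subrr.
have charM : char_poly M = ('X - 1%:P) ^+ n * char_poly T.
  rewrite HM /char_poly /char_poly_mx map_block_mx map_mx0 (scalar_mx_block n (m + l)).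
  rewrite opp_block_mx add_block_mx oppr0 addr0 det_lblock map_mx1.
  by rewrite -(raddfB (@scalar_mx _ n)) det_scalar polyC1.
set t : {poly R} := 'X - 1%:P.
have TUV : T = 1%:M - col_mx D F *m row_mx E G.
  rewrite mul_col_row (scalar_mx_block m l 1) opp_block_mx add_block_mx.
  by rewrite !add0r.
have cm : char_poly_mx T = t%:M + map_mx polyC (col_mx D F) *m map_mx polyC (row_mx E G).
  rewrite /char_poly_mx TUV map_mxB map_mx1 map_mxM /t (raddfB (@scalar_mx _ (m + l))) /= polyC1.
  by rewrite opprD opprK addrA.
have charT : char_poly T = t ^+ m * \det (t%:M + map_mx polyC (row_mx E G) *m map_mx polyC (col_mx D F)).
  have := @sylvester _ _ _ (map_mx polyC (col_mx D F)) (map_mx polyC (row_mx E G)) t.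
  rewrite -cm -/(char_poly T) exprD -mulrA mulrCA; apply: mulfI.
  by rewrite expf_neq0 // polyXsubC_eq0.
split => //.
by rewrite mup_geq ?monic_neq0 ?char_poly_monic // charM charT mulrA -exprD dvdp_mulIl.
Qed.
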